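(* Let $M$ be an $n\times n$ integer matrix with $|\det M|=2$ and all eigenvalues of modulus $>1$, let $e\in\mathbb Z^n\setminus M\mathbb Z^n$, $k_1=-\tfrac12 e$, $k_2=\tfrac12 e$, $f_j(x)=M^{-1}(x+k_j)$, and $T=f_1(T)\cup f_2(T)$ the corresponding twindragon, with neighbor graph $G=(V,E)$. Suppose $0=v_0,v_1,v_2,\dots$ is an infinite sequence in $V$ and $s_1s_2\dots\in\{1,2\}^{\mathbb N}$ such that for every $t\ge1$, $$v_t=Mv_{t-1}+k_{3-s_t}-k_{s_t}$$ (i.e. an infinite directed path in $G$ from the root with labels $s_1s_2\dots$ using no ''double arrow'' $v_t=Mv_{t-1}$). Then $\pi(s_1s_2\dots)=0$, the symmetry center of $T$.
   Context: $B_k=T\cap(T+k)$. Neighbor graph $G=(V,E)$: $V=\{k\in\mathbb Z^n: B_k\neq\emptyset\}$; for $k,k'\in V$ there is an edge from $k$ to $k'$ with label $i\in\{1,2\}$ iff $k'=Mk+k_j-k_i$ for some $j\in\{1,2\}$. The address map is $\pi(s_1s_2\dots)=\bigcap_q f_{s_1}\circ\dots\circ f_{s_q}(T)$. $T=-T$. *)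

(* Defs.v *)
From HB Require Import structures.
From mathcomp Require Import all_boot all_order all_algebra all_field.
From Stdlib Require Import Reals.
Set Implicit Arguments. Unset Strict Implicit. Unset Printing Implicit Defensive.

Definition vec (n : nat) := 'I_n -> R.

Definition int_to_R (z : int) : R :=
  match z with Posz m => INR m | Negz m => Ropp (INR (S m)) end.

Definition vadd n (x y : vec n) : vec n := fun i => Rplus (x i) (y i).
Definition vsub n (x y : vec n) : vec n := fun i => Rminus (x i) (y i).
Definition vscale n (c : R) (x : vec n) : vec n := fun i => Rmult c (x i).
Definition vzero n : vec n := fun _ => R0.

Definition cvR n (v : 'cV[int]_n) : vec n := fun i => int_to_R (v i ord0).

Definition mxvR n (A : 'I_n -> 'I_n -> R) (x : vec n) : vec n :=
  fun i => \big[Rplus/R0]_(j < n) Rmult (A i j) (x j).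

Definition mxR n (M : 'M[int]_n) : 'I_n -> 'I_n -> R :=
  fun i j => int_to_R (M i j).

Definition invR n (M : 'M[int]_n) : 'I_n -> 'I_n -> R :=
  fun i j => Rdiv (int_to_R (\adj M i j)) (int_to_R (\det M)).

(* digits k_1 = -e/2, k_2 = e/2 (k_j for j not in {1,2} is junk = 0) *)
Definition kdig n (e : 'cV[int]_n) (j : nat) : vec n :=
  if j == 1%N then vscale (Ropp (/2)) (cvR e)
  else if j == 2%N then vscale (/2) (cvR e)
  else @vzero n.

Definition fmap n (M : 'M[int]_n) (e : 'cV[int]_n) (j : nat) (x : vec n) : vec n :=
  mxvR (invR M) (vadd x (kdig e j)).

Definition fimg n (M : 'M[int]_n) (e : 'cV[int]_n) (j : nat) (A : vec n -> Prop)
  : vec n -> Prop := fun y => exists x, A x /\ y = fmap M e j x.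

(* cimg s i q A = f_{s_i} o f_{s_(i+1)} o ... o f_{s_(i+q-1)} (A) *)
Fixpoint cimg n (M : 'M[int]_n) (e : 'cV[int]_n) (s : nat -> nat) (i q : nat)
  (A : vec n -> Prop) : vec n -> Prop :=
  match q with
  | O => A
  | S q' => fimg M e (s i) (cimg M e s (S i) q' A)
  end.

Definition vbounded n (A : vec n -> Prop) : Prop :=
  exists B : R, forall x, A x -> forall i, Rle (Rabs (x i)) B.
Definition vclosed n (A : vec n -> Prop) : Prop :=
  forall (u : nat -> vec n) (x : vec n),
    (forall m, A (u m)) -> (forall i, Un_cv (fun m => u m i) (x i)) -> A x.
Definition vcompact n (A : vec n -> Prop) : Prop := vclosed A /\ vbounded A.

Definition is_attractor n (M : 'M[int]_n) (e : 'cV[int]_n) (T : vec n -> Prop) : Prop :=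
  (exists x, T x) /\ vcompact T /\
  (forall x, T x <-> (fimg M e 1 T x \/ fimg M e 2 T x)).

Definition vtrans n (T : vec n -> Prop) (k : vec n) : vec n -> Prop :=
  fun x => exists y, T y /\ x = vadd y k.

(* vertex set of the neighbor graph: k in Z^n with B_k = T n (T+k) nonempty *)
Definition in_V n (T : vec n -> Prop) (k : 'cV[int]_n) : Prop :=
  exists x, T x /\ vtrans T (cvR k) x.

(* Main.v *)
Require Import Defs.
From HB Require Import structures.
From mathcomp Require Import all_boot all_order all_algebra all_field.
From Stdlib Require Import Reals Lra Lia FunctionalExtensionality Classical.
Import GRing.Theory Num.Theory.
Set Implicit Arguments. Unset Strict Implicit. Unset Printing Implicit Defensive.
Delimit Scope R_scope with Re.
Delimit Scope ring_scope with R.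

Lemma i2R_sub (a b : nat) : int_to_R (Posz a - Posz b)%R = Rminus (INR a) (INR b).
Proof.
case: (leqP b a) => hab.
  rewrite (subzn hab) /=. rewrite minus_INR; last by apply/leP.
  reflexivity.
have h0 : (0 < b - a)%nat by rewrite subn_gt0.
have -> : (Posz a - Posz b)%R = Negz (b - a).-1.
  rewrite NegzE (prednK h0) -opprB (subzn (ltnW hab)). reflexivity.
change (Ropp (INR (S (b - a).-1)) = Rminus (INR a) (INR b)). rewrite (prednK h0).
rewrite minus_INR; last by apply/leP; rewrite ltnW.
lra.
Qed.

Lemma i2R_decomp (z : int) : exists a b : nat, z = (Posz a - Posz b)%R.
Proof.
case: z => m. exists m, 0%nat. rewrite GRing.subr0. reflexivity.
exists 0%nat, m.+1. rewrite NegzE GRing.sub0r. reflexivity.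
Qed.

Lemma i2R_add (z w : int) : int_to_R (z + w)%R = Rplus (int_to_R z) (int_to_R w).
Proof.
have [a [b ->]] := i2R_decomp z; have [c [d ->]] := i2R_decomp w.
have -> : ((Posz a - Posz b) + (Posz c - Posz d) = Posz (a + c) - Posz (b + d))%R.
  rewrite (PoszD a c) (PoszD b d) opprD addrACA. reflexivity.
rewrite !i2R_sub !plus_INR; lra.
Qed.

Lemma i2R_mul (z w : int) : int_to_R (z * w)%R = Rmult (int_to_R z) (int_to_R w).
Proof.
have [a [b ->]] := i2R_decomp z; have [c [d ->]] := i2R_decomp w.
have -> : ((Posz a - Posz b) * (Posz c - Posz d) = Posz (a * c + b * d) - Posz (a * d + b * c))%R.
  rewrite mulrBl !mulrBr (PoszD (a*c)) (PoszD (a * d)) !PoszM.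
  rewrite opprB opprD !addrA. 
  set x := (Posz a * Posz c)%R. set y := (Posz a * Posz d)%R.
  set u := (Posz b * Posz c)%R. set t := (Posz b * Posz d)%R.
  congr (_ - _)%R; exact: addrAC.
rewrite !i2R_sub !plus_INR !mult_INR; ring.
Qed.

Lemma i2R_0 : int_to_R 0 = R0. Proof. reflexivity. Qed.
Lemma i2R_1 : int_to_R 1 = R1. Proof. reflexivity. Qed.
Lemma i2R_opp z : int_to_R (- z)%R = Ropp (int_to_R z).
Proof.
have := i2R_add z (- z)%R; rewrite subrr i2R_0 => h; lra.
Qed.
Lemma i2R_le (z w : int) : (z <= w)%R -> Rle (int_to_R z) (int_to_R w).
Proof.
move=> h; have := subr_ge0 z w; rewrite h => /esym.
case E: (w - z)%R => [m|m] // _.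
have : int_to_R (w - z)%R = INR m by rewrite E.
rewrite i2R_add i2R_opp => h2. have := pos_INR m; lra.
Qed.
Lemma i2R_abs (z : int) : int_to_R `|z|%R = Rabs (int_to_R z).
Proof.
case: z => m.
  change (INR m = Rabs (INR m)). rewrite Rabs_right //; apply Rle_ge, pos_INR.
change (INR (S m) = Rabs (Ropp (INR (S m)))).
rewrite Rabs_Ropp Rabs_right //; apply Rle_ge, pos_INR.
Qed.

Lemma Rplus_assoc' : associative Rplus.
Proof. move=> x y z; ring. Qed.
HB.instance Definition _ := Monoid.isComLaw.Build R R0 Rplus Rplus_assoc' Rplus_comm Rplus_0_l.

Notation RS n F := (\big[Rplus/R0]_(j < n) F j).

Lemma big_i2R n (F : 'I_n -> int) :
  int_to_R (\sum_(j < n) F j)%R = \big[Rplus/R0]_(j < n) int_to_R (F j).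
Proof. exact: (big_morph int_to_R i2R_add i2R_0). Qed.

Lemma Rbig_mull n c (F : 'I_n -> R) :
  Rmult c (\big[Rplus/R0]_(j < n) F j) = \big[Rplus/R0]_(j < n) Rmult c (F j).
Proof.
apply: (big_morph (fun x => Rmult c x)); [move=> x y; ring | ring].
Qed.

Lemma Rbig_mulr n c (F : 'I_n -> R) :
  Rmult (\big[Rplus/R0]_(j < n) F j) c = \big[Rplus/R0]_(j < n) Rmult (F j) c.
Proof.
apply: (big_morph (fun x => Rmult x c)); [move=> x y; ring | ring].
Qed.

Lemma Rbig_opp n (F : 'I_n -> R) :
  Ropp (\big[Rplus/R0]_(j < n) F j) = \big[Rplus/R0]_(j < n) Ropp (F j).
Proof.
apply: (big_morph Ropp); [move=> x y; ring | ring].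
Qed.

Lemma Rbig_split n (F G : 'I_n -> R) :
  \big[Rplus/R0]_(j < n) Rplus (F j) (G j) =
  Rplus (\big[Rplus/R0]_(j < n) F j) (\big[Rplus/R0]_(j < n) G j).
Proof. exact: big_split. Qed.

Lemma Rbig_le n (F G : 'I_n -> R) : (forall j, Rle (F j) (G j)) ->
  Rle (\big[Rplus/R0]_(j < n) F j) (\big[Rplus/R0]_(j < n) G j).
Proof.
move=> h; elim/big_rec2: _ => [|j x y _ hxy]; first lra.
have := h j; lra.
Qed.

Lemma Rbig_abs n (F : 'I_n -> R) :
  Rle (Rabs (\big[Rplus/R0]_(j < n) F j)) (\big[Rplus/R0]_(j < n) Rabs (F j)).
Proof.
elim/big_rec2: _ => [|j x y _ hxy]; first by rewrite Rabs_R0; lra.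
apply: Rle_trans (Rabs_triang _ _) _; lra.
Qed.

Definition mxmulR n (A B : 'I_n -> 'I_n -> R) : 'I_n -> 'I_n -> R :=
  fun i j => \big[Rplus/R0]_(k < n) Rmult (A i k) (B k j).

Lemma mxvR_comp n (A B : 'I_n -> 'I_n -> R) u :
  mxvR A (mxvR B u) = mxvR (mxmulR A B) u.
Proof.
apply: functional_extensionality => i; rewrite /mxvR /mxmulR.
under eq_bigr do rewrite Rbig_mull.
rewrite exchange_big /=; apply: eq_bigr => j _.
rewrite Rbig_mulr; apply: eq_bigr => k _; ring.
Qed.

Lemma mxvR_sub n (A : 'I_n -> 'I_n -> R) u w :
  mxvR A (vsub u w) = vsub (mxvR A u) (mxvR A w).
Proof.
apply: functional_extensionality => i; rewrite /mxvR /vsub /Rminus Rbig_opp -Rbig_split.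
apply: eq_bigr => j _; ring.
Qed.

Lemma mxvR_scale n (A : 'I_n -> 'I_n -> R) c u :
  mxvR A (vscale c u) = vscale c (mxvR A u).
Proof.
apply: functional_extensionality => i; rewrite /mxvR /vscale Rbig_mull.
apply: eq_bigr => j _; ring.
Qed.

Lemma mxvR_id n (u : vec n) :
  mxvR (fun i j => if i == j then R1 else R0) u = u.
Proof.
apply: functional_extensionality => i; rewrite /mxvR (bigD1 i) //= eqxx big1.
  ring.
by move=> j /negbTE; rewrite eq_sym => ->; ring.
Qed.

Lemma RmulAC a b c : Rmult (Rmult a b) c = Rmult (Rmult a c) b.
Proof. ring. Qed.

Lemma Rdiv4 a b c d : c <> R0 -> d <> R0 ->
  Rmult (Rmult a (Rinv c)) (Rmult b (Rinv d)) = Rmult (Rmult a b) (Rinv (Rmult c d)).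
Proof. move=> hc hd; field; split; assumption. Qed.

Lemma i2R_det_neq0 n (M : 'M[int]_n) : `|\det M|%R = Posz 2 -> int_to_R (\det M) <> R0.
Proof.
move=> h; have := i2R_abs (\det M); rewrite h => h2 h3; rewrite h3 Rabs_R0 in h2.
move: h2; change (INR 2 = 0%Re -> False); rewrite INR_IZR_INZ /=; lra.
Qed.

Lemma invR_mxR n (M : 'M[int]_n) : int_to_R (\det M) <> R0 ->
  mxmulR (invR M) (mxR M) = fun i j => if i == j then R1 else R0.
Proof.
move=> hd; apply: functional_extensionality => i; apply: functional_extensionality => j.
rewrite /mxmulR /invR /mxR.
have -> : \big[Rplus/R0]_(k < n) Rmult (Rdiv (int_to_R (\adj M i k)) (int_to_R (\det M))) (int_to_R (M k j))
   = Rdiv (int_to_R ((\adj M *m M) i j)) (int_to_R (\det M)).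
  rewrite [(_ *m _)%R i j]mxE big_i2R /Rdiv Rbig_mulr; apply: eq_bigr => k _; rewrite i2R_mul; exact: RmulAC.
rewrite mul_adj_mx mxE; case: (i == j) => /=.
  rewrite mulr1n /Rdiv Rinv_r //.
by rewrite /Rdiv Rmult_0_l.
Qed.

Lemma fmap_inv n (M : 'M[int]_n) u : int_to_R (\det M) <> R0 ->
  mxvR (invR M) (mxvR (mxR M) u) = u.
Proof. by move=> hd; rewrite mxvR_comp invR_mxR // mxvR_id. Qed.

Fixpoint ipow n (A : 'M[int]_n) (N : nat) : 'M[int]_n :=
  match N with O => 1%:M | S N' => (A *m ipow A N')%R end.

Definition RN n (M : 'M[int]_n) N : 'I_n -> 'I_n -> R :=
  fun i j => Rdiv (int_to_R (ipow (\adj M) N i j)) (pow (int_to_R (\det M)) N).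

Lemma iter_RN n (M : 'M[int]_n) N u : int_to_R (\det M) <> R0 ->
  iter N (mxvR (invR M)) u = mxvR (RN M N) u.
Proof.
move=> hd; elim: N => [|N IH].
  rewrite /=; have -> : RN M 0 = fun i j => if i == j then R1 else R0.
    apply: functional_extensionality => i; apply: functional_extensionality => j.
    rewrite /RN /= mxE; case: (i == j); rewrite /= /Rdiv; field.
  by rewrite mxvR_id.
rewrite iterS IH mxvR_comp; congr mxvR.
apply: functional_extensionality => i; apply: functional_extensionality => j.
rewrite /mxmulR /RN /invR /= mxE big_i2R /Rdiv Rbig_mulr; apply: eq_bigr => k _.
rewrite i2R_mul; apply: Rdiv4; [exact: hd| exact: pow_nonzero].
Qed.

Lemma i2R_pow2 N : int_to_R (Posz 2 ^+ N)%R = pow 2 N.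
Proof.
elim: N => [|N IH]; first reflexivity.
rewrite exprS i2R_mul IH /=; f_equal; change (INR 2 = 2%Re); rewrite INR_IZR_INZ; reflexivity.
Qed.

Lemma RN_contr n (M : 'M[int]_n) N (u : vec n) K :
  `|\det M|%R = Posz 2 ->
  (forall i, (\sum_(j < n) `|ipow (\adj M) N i j| < Posz 2 ^+ N)%R) ->
  (forall j, Rle (Rabs (u j)) K) ->
  forall i, Rle (Rabs (mxvR (RN M N) u i)) (Rmult (Rdiv (pow 2 N - 1) (pow 2 N)) K).
Proof.
move=> hdet hA hu i.
have hK : Rle 0 K by apply: Rle_trans (hu i) ; apply Rabs_pos.
have hdR : Rabs (int_to_R (\det M)) = 2%Re.
  rewrite -i2R_abs hdet; change (INR 2 = 2%Re); rewrite INR_IZR_INZ; reflexivity.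
have h2 : Rlt 0 (pow 2 N) by apply: pow_lt; lra.
rewrite /mxvR; eapply Rle_trans; first exact: Rbig_abs.
eapply Rle_trans; first apply: (_ : Rle _ (\big[Rplus/R0]_(j < n) Rmult (Rdiv (int_to_R `|ipow (\adj M) N i j|%R) (pow 2 N)) K)).
  apply: Rbig_le => j; rewrite /RN Rabs_mult /Rdiv Rabs_mult Rabs_inv -RPow_abs hdR i2R_abs.
  apply: Rmult_le_compat_l; last exact: hu.
  apply: Rmult_le_pos; [apply: Rabs_pos | apply: Rlt_le; apply: Rinv_0_lt_compat; exact: h2].
rewrite -Rbig_mulr /Rdiv -Rbig_mulr -big_i2R.
apply: Rmult_le_compat_r => //; apply: Rmult_le_compat_r; first by apply: Rlt_le; apply: Rinv_0_lt_compat.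
have := hA i; rewrite -lezD1 => /i2R_le; rewrite i2R_add i2R_pow2 => h; change (int_to_R 1) with R1 in h. set X := int_to_R _ in h *. replace R1 with 1%Re in h by reflexivity. lra.
Qed.



Lemma Rid1 a b : (/ 2 * (a + / 2 * b - - / 2 * b) + - / 2 * b)%Re = (/ 2 * a)%Re.
Proof. field. Qed.
Lemma Rid2 a b : (/ 2 * (a + - / 2 * b - / 2 * b) + / 2 * b)%Re = (/ 2 * a)%Re.
Proof. field. Qed.

Definition cc N := Rdiv (pow 2 N - 1) (pow 2 N).

Lemma cc_bounds N : (0 < N)%nat -> Rle 0 (cc N) /\ Rlt (cc N) 1.
Proof.
move=> hN; have h1 : Rle 2 (pow 2 N).
  case: N hN => [//|N] _; rewrite /=; have := pow_R1_Rle 2 N; lra.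
rewrite /cc; split.
  apply: Rmult_le_pos; first lra. apply: Rlt_le; apply: Rinv_0_lt_compat; lra.
apply: (Rmult_lt_reg_r (pow 2 N)); first lra.
rewrite /Rdiv Rmult_assoc Rinv_l; lra.
Qed.

Lemma contrL n (M : 'M[int]_n) N (u : vec n) K l :
  `|\det M|%R = Posz 2 ->
  (forall i, (\sum_(j < n) `|ipow (\adj M) N i j| < Posz 2 ^+ N)%R) ->
  (forall j, Rle (Rabs (u j)) K) ->
  forall i, Rle (Rabs (iter (l * N) (mxvR (invR M)) u i)) (Rmult (pow (cc N) l) K).
Proof.
move=> hdet hA hu; elim: l => [|l IH] i.
  rewrite mul0n /= Rmult_1_l; exact: hu.
have hd := i2R_det_neq0 hdet.
rewrite mulSn iterD iter_RN //.
have := RN_contr hdet hA IH i.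
rewrite /= -/(cc N); lra.
Qed.

Fixpoint gpt n (M : 'M[int]_n) (e : 'cV[int]_n) (s : nat -> nat) (i q : nat) (y : vec n) : vec n :=
  match q with O => y | S q' => fmap M e (s i) (gpt M e s (S i) q' y) end.

Lemma fmap_sub n (M : 'M[int]_n) e j x y :
  vsub (fmap M e j x) (fmap M e j y) = mxvR (invR M) (vsub x y).
Proof.
rewrite /fmap -mxvR_sub; congr mxvR; apply: functional_extensionality => i.
rewrite /vsub /vadd; ring.
Qed.

Lemma pow_small (c K a : R) : Rle 0 c -> Rlt c 1 -> Rlt 0 K ->
  (forall l, (0 < l)%nat -> Rle (Rabs a) (Rmult (pow c l) K)) -> a = R0.
Proof.
move=> c0 c1 K0 h; apply: NNPP => ha.
have hpa : Rlt 0 (Rabs a) by apply: Rabs_pos_lt.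
have [L hL] := pow_lt_1_zero c (ltac:(rewrite Rabs_right; lra)) (Rdiv (Rabs a) K)
  (ltac:(apply: Rdiv_lt_0_compat; lra)).
have := hL (S L) (ltac:(lia)); rewrite Rabs_right; last by apply: Rle_ge; apply: pow_le.
move=> h1; have h2 := h (S L) isT.
have : Rlt (Rmult (pow c (S L)) K) (Rabs a).
  apply: (Rmult_lt_reg_r (Rinv K)); first by apply: Rinv_0_lt_compat.
  rewrite Rmult_assoc Rinv_r; last lra. rewrite Rmult_1_r; exact: h1.
lra.
Qed.


Import Order.TTheory.
Local Open Scope ring_scope.

Definition rsb n (A : 'M[algC]_n) (a : algC) := forall i, \sum_(j < n) `|A i j| <= a.

Lemma rs_mul n (A B : 'M[algC]_n) a b : rsb A a -> rsb B b -> 0 <= b -> rsb (A *m B) (a * b).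
Proof.
move=> hA hB hb i.
apply: le_trans (_ : \sum_(j < n) \sum_(k < n) `|A i k| * `|B k j| <= _).
  apply: ler_sum => j _; rewrite mxE; apply: le_trans (ler_norm_sum _ _ _) _.
  by apply: ler_sum => k _; rewrite normrM.
rewrite exchange_big /=.
apply: le_trans (_ : \sum_(k < n) `|A i k| * b <= _).
  by apply: ler_sum => k _; rewrite -mulr_sumr; apply: ler_wpM2l => //.
by rewrite -mulr_suml; apply: ler_wpM2r.
Qed.

Fixpoint cpow n (A : 'M[algC]_n) (N : nat) : 'M[algC]_n :=
  match N with O => 1%:M | S N' => A *m cpow A N' end.

Lemma rs_one n : rsb (1%:M : 'M[algC]_n) 1.
Proof.
move=> i; rewrite (bigD1 i) //= big1 ?addr0.
  by rewrite mxE eqxx /= normr1.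
by move=> j /negbTE hj; rewrite mxE eq_sym hj /= normr0.
Qed.

Lemma rs_pow n (W : 'M[algC]_n) c : 0 <= c -> rsb W c -> forall N, rsb (cpow W N) (c ^+ N).
Proof.
move=> c0 hW; elim=> [|N IH] /=; first exact: rs_one.
by rewrite exprS; apply: rs_mul => //; apply: exprn_ge0.
Qed.

Lemma rs_tot n (A : 'M[algC]_n) : rsb A (\sum_(i < n) \sum_(j < n) `|A i j|).
Proof.
move=> i; rewrite [X in _ <= X](bigD1 i) //= lerDl.
by apply: sumr_ge0 => k _; apply: sumr_ge0.
Qed.

Lemma cpow_conj n (B W L R : 'M[algC]_n) : B = L *m W *m R -> R *m L = 1%:M -> L *m R = 1%:M ->
  forall N, cpow B N = L *m cpow W N *m R.
Proof.
move=> hB hRL hLR; elim=> [|N IH] /=; first by rewrite mulmx1 hLR.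
rewrite IH hB -!mulmxA (mulmxA R L) hRL mul1mx.
by [].
Qed.

Lemma bernoulli (h : algC) N : 0 <= h -> 1 + N%:R * h <= (1 + h) ^+ N.
Proof.
move=> h0; elim: N => [|N IH]; first by rewrite mul0r addr0 expr0.
rewrite exprS; apply: le_trans (_ : (1 + h) * (1 + N%:R * h) <= _); last first.
  by apply: ler_wpM2l => //; apply: addr_ge0.
rewrite mulrDl mul1r mulrDr mulr1 -natr1 mulrDl mul1r addrA [_ + h]addrC addrA.
have e : h + 1 + N%:R * h = (1 + N%:R * h) + h by rewrite [h + 1]addrC addrAC.
rewrite e lerD2l lerDl; apply: mulr_ge0 => //; apply: mulr_ge0 => //.
Qed.

Lemma trig_eig n (U : 'M[algC]_n) i : is_trig_mx U -> eigenvalue U (U i i).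
Proof.
move=> hU; rewrite eigenvalue_root_char char_poly_trig // rootE horner_prod (bigD1 i) //=.
by rewrite hornerXsubC subrr mul0r.
Qed.

Lemma eig_conj n (P B : 'M[algC]_n) d : P \in unitmx -> eigenvalue (conjmx P B) d -> eigenvalue B d.
Proof.
move=> hP /eigenvalueP [v hv vn0]; apply/eigenvalueP; exists (v *m P).
  move: hv; rewrite /conjmx pinvmxE // => hv.
  by rewrite scalemxAl -hv !mulmxA mulmxKV.
apply: contraNneq vn0 => h; by rewrite -(mulmxK hP v) h mul0mx.
Qed.

Lemma eig_inv n (Mc : 'M[algC]_n) d : Mc \in unitmx -> eigenvalue (invmx Mc) d ->
  d != 0 /\ eigenvalue Mc d^-1.
Proof.
move=> hM /eigenvalueP [w hw wn0].
have e1 : w = d *: (w *m Mc) by rewrite scalemxAl -hw mulmxKV.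
have dn0 : d != 0.
  apply: contraNneq wn0 => hd; by rewrite e1 hd scale0r.
split => //; apply/eigenvalueP; exists w => //.
by rewrite {2}e1 scalerA mulVf // scale1r.
Qed.

Definition Dg n (x : algC) : 'M[algC]_n := diag_mx (\row_(i < n) x ^+ i).

Lemma Dg_entry n (U : 'M[algC]_n) x y i j :
  (Dg n x *m U *m Dg n y) i j = x ^+ i * U i j * y ^+ j.
Proof. by rewrite /Dg mul_mx_diag mxE mul_diag_mx !mxE. Qed.

Lemma Dg_inv n (x : algC) : x != 0 -> Dg n x *m Dg n x^-1 = 1%:M.
Proof.
move=> hx; apply/matrixP => i j; rewrite /Dg mul_diag_mx !mxE.
case: (eqVneq i j) => [->|hij] /=; first by rewrite mulr1n exprVn mulfV // expf_neq0.
by rewrite mulr0n mulr0.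
Qed.

Lemma W_bound n (U : 'M[algC]_n) (d rho K : algC) : is_trig_mx U -> 0 < d -> d <= 1 ->
  (forall i, `|U i i| <= rho) -> (forall i, \sum_(j < n) `|U i j| <= K) ->
  rsb (Dg n d *m U *m Dg n d^-1) (rho + d * K).
Proof.
move=> /is_trig_mxP hU d0 d1 hr hK i.
rewrite (bigD1 i) //= Dg_entry exprVn mulrAC mulfV ?expf_neq0 ?gt_eqF // mul1r.
apply: lerD; first exact: hr.
apply: le_trans (_ : \sum_(j < n | j != i) d * `|U i j| <= _).
  apply: ler_sum => j hj; rewrite Dg_entry.
  case: (ltnP i j) => hij; first by rewrite hU // mulr0 mul0r normr0 mulr_ge0 // ltW.
  have hji : (j < i)%nat by rewrite ltn_neqAle hij andbT; apply: contraNneq hj => /val_inj ->.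
  rewrite mulrAC exprVn -exprB ?unitfE ?gt_eqF // normrM ger0_norm; last exact: (exprn_ge0 _ (ltW d0)).
  apply: ler_wpM2r => //; case E: (i - j)%nat => [|k]; first by move: hji; rewrite -subn_gt0 E.
  rewrite exprS.
  by apply: ler_piMr; [exact: ltW | exact: exprn_ile1 (ltW d0) d1].
rewrite -mulr_sumr; apply: ler_wpM2l; first exact: ltW.
apply: le_trans (hK i); rewrite [X in _ <= X](bigD1 i) //= lerDr.
exact: normr_ge0.
Qed.

Lemma partC n (Bm : 'M[algC]_n) : (0 < n)%nat -> (forall d, eigenvalue Bm d -> `|d| < 1) ->
  exists N, (0 < N)%nat /\ forall i, \sum_(j < n) `|cpow Bm N i j| < 1.
Proof.
move=> n0 heB.
have [P Pu hU] := Schur Bm n0.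
have hP : P \in unitmx by exact: unitarymx_unit.
set U := conjmx P Bm in hU.
have hUd : forall i, `|U i i| < 1 by move=> i; apply: heB; apply: eig_conj hP (trig_eig i hU).
pose pr := \prod_(k < n) (1 - `|U k k|).
pose rho := 1 - pr.
have hpr0 : 0 < pr by apply: prodr_gt0 => k _; rewrite subr_gt0.
have hrho1 : rho < 1 by rewrite /rho ltrBlDr ltrDl.
have hrho0 : 0 <= rho.
  rewrite /rho subr_ge0; apply: prodr_ile1 => k _.
  by rewrite subr_ge0 ltW //= lerBlDr lerDl normr_ge0.
have hrhoi : forall i, `|U i i| <= rho.
  move=> i; rewrite /rho lerBrDr -lerBrDl /pr (bigD1 i) //=.
  apply: ler_piMr; first by rewrite subr_ge0 ltW.
  apply: prodr_ile1 => k _; by rewrite subr_ge0 ltW //= lerBlDr lerDl normr_ge0.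
pose K := \sum_(i < n) \sum_(j < n) `|U i j|.
have hK0 : 0 <= K by apply: sumr_ge0 => i _; apply: sumr_ge0.
have hKi : forall i, \sum_(j < n) `|U i j| <= K by exact: rs_tot.
pose d := (1 - rho) / (2 * (K + 1)).
have hK1 : 0 < 2 * (K + 1) by apply: mulr_gt0 => //; apply: ltr_wpDl.
have d0 : 0 < d by apply: divr_gt0 => //; rewrite subr_gt0.
have d1 : d <= 1.
  rewrite /d ler_pdivrMr // mul1r.
  apply: le_trans (_ : 1 <= _); first by rewrite lerBlDr lerDl.
  rewrite mulrDr mulr1; apply: le_trans (_ : 2 <= _); first by rewrite ler1n.
  by rewrite lerDr mulr_ge0.
have dK : d * K <= (1 - rho) / 2.
  rewrite /d mulrAC ler_pdivrMr // -mulrA [2^-1 * _]mulrA mulVf ?pnatr_eq0 // mul1r.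
  apply: ler_wpM2l; first by rewrite subr_ge0 ltW.
  by rewrite lerDl.
pose c := rho + d * K.
have c1 : c < 1.
  apply: le_lt_trans (_ : rho + (1 - rho) / 2 < 1); first by rewrite lerD2l.
  have t0 : 0 < 1 - rho by rewrite subr_gt0.
  rewrite [X in _ < X](_ : 1 = rho + (1 - rho)); last by rewrite addrC subrK.
  by rewrite ltrD2l ltr_pdivrMr // ltr_pMr // ltr1n.
have c0 : 0 <= c by apply: addr_ge0 => //; apply: mulr_ge0 => //; exact: ltW.
have hW := W_bound hU d0 d1 hrhoi hKi.
pose L := invmx P *m Dg n d^-1.
pose R := Dg n d *m P.
have dn0 : d != 0 by rewrite gt_eqF.
have hDD : Dg n d^-1 *m Dg n d = 1%:M by rewrite -{2}(invrK d) Dg_inv // invr_eq0.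
have hRL : R *m L = 1%:M by rewrite /R /L mulmxA -(mulmxA _ P) mulmxV // mulmx1 Dg_inv.
have hLR : L *m R = 1%:M by rewrite /R /L mulmxA -(mulmxA _ _ (Dg n d)) hDD mulmx1 mulVmx.
have hB : Bm = L *m (Dg n d *m U *m Dg n d^-1) *m R.
  rewrite /L /R /U /conjmx pinvmxE // !mulmxA.
  rewrite -(mulmxA (invmx P)) hDD mulmx1.
  rewrite -(mulmxA _ (Dg n d^-1) (Dg n d)) hDD mulmx1.
  by rewrite mulVmx // mul1mx mulmxKV.
have hpow := cpow_conj hB hRL hLR.
pose a := \sum_(i < n) \sum_(j < n) `|L i j|.
pose b := \sum_(i < n) \sum_(j < n) `|R i j|.
have a0 : 0 <= a by apply: sumr_ge0 => i _; apply: sumr_ge0.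
have b0 : 0 <= b by apply: sumr_ge0 => i _; apply: sumr_ge0.
have hrs : forall N, rsb (cpow Bm N) (a * c ^+ N * b).
  move=> N; rewrite hpow; apply: rs_mul; last exact: b0; last exact: rs_tot.
  apply: rs_mul; [exact: rs_tot | exact: rs_pow | exact: exprn_ge0].
suff [N [N0 hN]] : exists N, (0 < N)%nat /\ a * c ^+ N * b < 1.
  by exists N; split => // i; apply: le_lt_trans (hN); apply: hrs.
case: (eqVneq c 0) => [->|cn0].
  by exists 1%N; rewrite expr1 mulr0 mul0r ltr01.
have cp : 0 < c by rewrite lt_def cn0 c0.
pose h := c^-1 - 1.
have h0 : 0 < h by rewrite /h subr_gt0 invf_gt1.
pose N := (Num.Def.archi_bound (a * b / h)).+1.
exists N; split => //.
have hN : a * b < N%:R * h.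
  rewrite -ltr_pdivrMr //; apply: lt_le_trans (archi_boundP _) _.
    by apply: divr_ge0 => //; [apply: mulr_ge0 | exact: ltW].
  by rewrite ler_nat.
rewrite mulrAC -ltr_pdivlMr ?exprn_gt0 // mul1r -exprVn.
apply: lt_le_trans hN _.
have e : c^-1 = 1 + h by rewrite /h addrC subrK.
rewrite e; apply: le_trans (bernoulli N (ltW h0)); by rewrite lerDr.
Qed.

Lemma partA' n (M : 'M[int]_n)
  (hdet : `|\det M| = 2%:Z)
  (heig : forall a : algC,
      eigenvalue (map_mx (fun z : int => (z%:~R : algC)) M) a -> (1 < `|a|)) :
  exists N, (0 < N)%nat /\
    forall i, (\sum_(j < n) `|ipow (\adj M) N i j| < 2%:Z ^+ N).
Proof.
set Mc := map_mx _ M in heig.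
have n0 : (0 < n)%nat.
  case: n M hdet {Mc heig} => [|//] M; by rewrite det_mx00.
have hdc : \det Mc = (\det M)%:~R by rewrite /Mc (det_map_mx intr).
have hdn : `|\det Mc| = 2 by rewrite hdc -intr_norm hdet.
have hMu : Mc \in unitmx.
  by rewrite unitmxE unitfE -normr_eq0 hdn pnatr_eq0.
pose Bm := invmx Mc.
have heB : forall d, eigenvalue Bm d -> `|d| < 1.
  move=> d /(eig_inv hMu) [dn0 /heig]; rewrite normfV invf_gt1 //.
  by rewrite normr_gt0.
have [N [N0 hN]] := partC n0 heB.
exists N; split => // i.
have hpow : forall N, cpow Bm N = ((\det Mc)^-1) ^+ N *: map_mx (fun z : int => (z%:~R : algC)) (ipow (\adj M) N).
  elim=> [|k IH] /=; first by rewrite expr0 scale1r map_scalar_mx /= rmorph1.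
  rewrite IH /Bm /invmx hMu -scalemxAl -scalemxAr scalerA -exprS.
  by rewrite map_mxM (map_mx_adj intr).
have := hN i; rewrite hpow.
under eq_bigr do rewrite !mxE normrM normrX normfV hdn -intr_norm.
rewrite -mulr_sumr -rmorph_sum /= -ltr_pdivlMl ?exprn_gt0 // ?invr_gt0 //.
rewrite mulr1 -exprVn invrK => h; rewrite -(ltr_int algC) rmorphXn.
exact: h.
Qed.



Theorem proposition12p3 (n : nat) (M : 'M[int]_n) (e : 'cV[int]_n)
  (T : vec n -> Prop)
  (hdet : `|\det M| = 2%:Z)
  (heig : forall a : algC,
      eigenvalue (map_mx (fun z : int => (z%:~R : algC)) M) a -> (1 < `|a|))
  (he : ~ (exists z : 'cV[int]_n, e = (M *m z)))
  (hT : is_attractor M e T)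
  (v : nat -> 'cV[int]_n) (s : nat -> nat)
  (hv0 : v 0%nat = 0)
  (hvV : forall t : nat, in_V T (v t))
  (hs : forall t : nat, (1 <= t)%nat -> s t = 1%nat \/ s t = 2%nat)
  (hpath : forall t : nat, (1 <= t)%nat ->
      cvR (v t) = vsub (vadd (mxvR (mxR M) (cvR (v t.-1))) (kdig e (3 - s t)%nat))
                       (kdig e (s t)))
  : forall x : vec n,
      (forall q : nat, (1 <= q)%nat -> cimg M e s 1 q T x) <-> x = @vzero n.
Proof.
have hd := i2R_det_neq0 hdet.
have [N [hN0 hA]] := partA' hdet heig.
have [c0 c1] := cc_bounds hN0.
case: hT => [[y0 Ty0] [[hcl [BT hBT]] hTeq]].
pose B := Rabs BT.
have hB : forall x, T x -> forall i, (Rabs (x i) <= B)%Re.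
  move=> x Tx i; apply: Rle_trans (hBT x Tx i) _; exact: Rle_abs.
pose p t := vscale (/2) (cvR (v t)).
have hp : forall t i, (Rabs (p t i) <= B)%Re.
  move=> t i; have [x [Tx [y [Ty hxy]]]] := hvV t.
  have : cvR (v t) i = (x i - y i)%Re by rewrite hxy /vadd; ring.
  rewrite /p /vscale => ->.
  have := hB x Tx i; have := hB y Ty i.
  move=> h1 h2; rewrite Rabs_mult Rabs_right; last lra.
  apply: Rle_trans (Rmult_le_compat_l _ _ _ _ (Rabs_triang _ _)) _; first lra.
  rewrite Rabs_Ropp; lra.
have I1 : forall t, (1 <= t)%nat -> fmap M e (s t) (p t) = p t.-1.
  move=> t ht; rewrite /fmap.
  have -> : vadd (p t) (kdig e (s t)) = mxvR (mxR M) (p t.-1).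
    rewrite /p mxvR_scale; apply: functional_extensionality => i.
    rewrite /vadd /vscale (hpath t ht) /vsub /vadd.
    case: (hs t ht) => -> /=; rewrite /kdig /= /vscale; [exact: Rid1 | exact: Rid2].
  exact: fmap_inv.
have Tf : forall t z, (1 <= t)%nat -> T z -> T (fmap M e (s t) z).
  move=> t z ht Tz; apply/hTeq.
  case: (hs t ht) => ->; [left|right]; by exists z.
have gT : forall q i y, (1 <= i)%nat -> T y -> T (gpt M e s i q y).
  elim=> [|q IH] i y hi Ty //=; apply: Tf => //; exact: IH.
have gD : forall q i y, (1 <= i)%nat ->
    vsub (gpt M e s i q y) (p i.-1) = iter q (mxvR (invR M)) (vsub y (p (i.-1 + q)%nat)).
  elim=> [|q IH] i y hi; first by rewrite addn0.
  rewrite /= -(I1 i hi) fmap_sub IH //; congr (mxvR _ (iter _ _ (vsub _ (p _)))).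
  by rewrite addnS -addSn prednK.
have cg : forall q i x, cimg M e s i q T x -> exists y, T y /\ x = gpt M e s i q y.
  elim=> [|q IH] i x /=; first by move=> Tx; exists x.
  move=> [z [cz ->]]; have [y [Ty ->]] := IH _ _ cz; by exists y.
pose K := (2 * B + 1)%Re.
have hK : (0 < K)%Re by rewrite /K /B; have := Rabs_pos BT; lra.
have hdiff : forall y t i, T y -> (Rabs (vsub y (p t) i) <= K)%Re.
  move=> y t i Ty; rewrite /vsub /K.
  apply: Rle_trans (Rabs_triang _ _) _; rewrite Rabs_Ropp.
  have := hB y Ty i; have := hp t i; lra.
have pT : forall t, T (p t).
  move=> t; apply: (hcl (fun l => gpt M e s t.+1 (l * N) y0)).
    move=> l; exact: gT.
  move=> i eps heps.
  have [L hL] := pow_lt_1_zero (cc N) (ltac:(rewrite Rabs_right; lra)) (Rdiv eps K)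
    (ltac:(apply: Rdiv_lt_0_compat; lra)).
  exists L => l hl; rewrite /Rdist.
  have := gD (l * N)%nat t.+1 y0 isT; rewrite /= => hg.
  have -> : (gpt M e s t.+1 (l * N) y0 i - p t i)%Re = vsub (gpt M e s t.+1 (l * N) y0) (p t) i by [].
  rewrite hg.
  eapply Rle_lt_trans; first exact: (contrL l hdet hA (fun j => hdiff y0 _ j Ty0) i).
  have := hL l hl; rewrite Rabs_right; last by apply: Rle_ge; apply: pow_le.
  move=> h1; apply: (Rmult_lt_reg_r (Rinv K)); first by apply: Rinv_0_lt_compat.
  rewrite Rmult_assoc Rinv_r; last lra. rewrite Rmult_1_r; exact: h1.
have pc : forall q i, (1 <= i)%nat -> cimg M e s i q T (p i.-1).
  elim=> [|q IH] i hi /=; first exact: pT.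
  exists (p i); split; first exact: (IH i.+1 isT).
  by rewrite (I1 i hi).
have p0 : p 0%N = @vzero n.
  apply: functional_extensionality => i; rewrite /p /vscale /cvR hv0 mxE /= /vzero; ring.
move=> x; split; last first.
  move=> -> q _; rewrite -p0; exact: (pc q 1%N isT).
move=> hx; apply: functional_extensionality => i; rewrite /vzero.
apply: (pow_small c0 c1 hK) => l hl.
have [y [Ty hxy]] := cg _ _ _ (hx (l * N)%nat (ltac:(by rewrite muln_gt0 hl hN0))).
have := gD (l * N)%nat 1%N y isT; rewrite -hxy p0 /= => hg.
have -> : x i = vsub x (@vzero n) i by rewrite /vsub /vzero; ring.
rewrite hg; exact: (contrL l hdet hA (fun j => hdiff y _ j Ty) i).
Qed.
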